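(* Let $\Pi$ be a cGAP whose VC rule has size $m$. For each function $\sigma$ assigning to every ground VC-rule instance $B_1(v),\dots,B_m(v)\hookleftarrow A_1(v),\dots,A_m(v)$ of $\Pi$ an index $\sigma(v)\in\{1,\dots,m\}$, let $\Pi'_\sigma$ be the ground GAP consisting of all ground non-VC rules of $\Pi$ together with the rules $B_{\sigma(v)}(v):\mu\leftarrow A_{\sigma(v)}(v):\mu$, one for each ground VC-rule instance. Then an interpretation $I$ is a coherent model of $\Pi$ if and only if there exists such a $\sigma$ with $I=\mathcal{MM}(\Pi'_\sigma)$ and $I$ satisfies every ground VC-rule instance of $\Pi$.
   Context: Fix disjoint sets of unary vertex predicate symbols and binary edge predicate symbols; constants are the vertices of a finite social network. An annotation is an element of $[0,1]$, an annotation variable (ranging over $[0,1]$), or $f(t_1,\dots,t_k)$ for an annotation function symbol $f$ denoting a fixed function $[0,1]^k\to[0,1]$ and annotations $t_i$. An annotated atom is $A:\mu$ with $A$ an atom and $\mu$ an annotation; an annotated (GAP) rule has the form $A_0:f(\mu_1,\dots,\mu_n)\leftarrow A_1:\mu_1,\dots,A_n:\mu_n$ ($n=0$: a fact); a GAP is a finite set of such rules. A vertex choice (VC) rule of size $m$ is $b_1(X),\dots,b_m(X)\hookleftarrow a_1(X),\dots,a_m(X)$ with $a_i,b_i$ vertex predicate symbols; its ground instance for vertex $v$ is $b_1(v),\dots,b_m(v)\hookleftarrow a_1(v),\dots,a_m(v)$. A choice GAP (cGAP) $\Pi$ is a finite set of annotated rules plus exactly one VC rule. An interpretation is a map $I$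 from ground atoms to $[0,1]$, ordered pointwise ($I_1\preceq I_2$ iff $I_1(A)\le I_2(A)$ for all $A$). $I\models A:\mu$ iff $I(A)\ge\mu$; $I$ satisfies a ground annotated rule iff $I(A_0)$ is at least the head annotation or some body annotated atom is not satisfied; $I$ satisfies a ground VC rule $B_1,\dots,B_m\hookleftarrow A_1,\dots,A_m$ iff there is $i$ with $I(B_i)=I(A_i)$ and $I(B_j)=0$ for all $j\neq i$; a non-ground rule is satisfied iff all its ground instances are; a model of $\Pi$ satisfies all its rules. Every GAP $P$ has a unique $\preceq$-minimal model, denoted $\mathcal{MM}(P)$ (the least fixpoint of its immediate-consequence operator). Coherence transform: for an interpretation $I$, ${\rm coh}(\Pi,I)$ is the GAP consisting of all ground non-VC rules of $\Pi$ together with, for each ground VC-rule instance $B_1(v),\dots,B_m(v)\hookleftarrow A_1(v),\dots,A_m(v)$ and each $i$ with $I(A_i(v))>0$ and $I(A_i(v))=I(B_i(v))$, the rule $B_i(v):\mu\leftarrow A_i(v):\mu$. A model $M$ of $\Pi$ is coherent iff $M=\mathcal{MM}({\rm coh}(\Pi,M))$. *)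

(* Defs.v *)
From Stdlib Require Import Reals List.
Import ListNotations.
Open Scope R_scope.

Set Implicit Arguments.

Section Syntax.
(* V  : vertices of the social network (the constants);
   VP : unary vertex predicate symbols; EP : binary edge predicate symbols
   (disjoint since they are different types). *)
Variables (V VP EP : Type).

Inductive term : Type := TVar (x : nat) | TConst (v : V).

Inductive atom : Type :=
  | AtV (p : VP) (t : term)
  | AtE (e : EP) (t1 t2 : term).

Inductive gatom : Type :=
  | GV (p : VP) (v : V)
  | GE (e : EP) (u w : V).

(* Annotations: a constant, an annotation variable (indexed by nat), or an
   annotation function symbol (denoting a function on lists of reals, used at
   arity = length of its argument list) applied to annotations. *)
Inductive annot : Type :=
  | AConst (c : R)
  | AVar (x : nat)
  | AApp (f : list R -> R) (args : list annot).

(* An annotated rule  A0 : f(mu_1,...,mu_n) <- A1 : mu_1, ..., An : mu_n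
   (n = 0 : a fact), over atoms of type At. *)
Record arule (At : Type) : Type := mkRule {
  r_head : At;
  r_fun  : list R -> R;
  r_body : list (At * annot)
}.

(* A choice GAP: finitely many annotated rules plus exactly one VC rule
   b_0(X),...,b_{m-1}(X) <-< a_0(X),...,a_{m-1}(X) of size m
   (indices are 0-based: i < m). *)
Record cgap : Type := mkCGAP {
  c_rules : list (arule atom);
  vc_m : nat;
  vc_a : nat -> VP;
  vc_b : nat -> VP
}.

End Syntax.

Arguments TVar {V} x.
Arguments TConst {V} v.
Arguments AtV {V VP EP} p t.
Arguments AtE {V VP EP} e t1 t2.
Arguments GV {V VP EP} p v.
Arguments GE {V VP EP} e u w.
Arguments mkRule {At} r_head r_fun r_body.

Section Semantics.
Variables (V VP EP : Type).

Definition in01 (x : R) : Prop := 0 <= x <= 1.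

Fixpoint eval_annot (rho : nat -> R) (t : annot) : R :=
  match t with
  | AConst c => c
  | AVar x => rho x
  | AApp f args => f (map (eval_annot rho) args)
  end.

Definition fun01 (k : nat) (f : list R -> R) : Prop :=
  forall l : list R, length l = k -> Forall in01 l -> in01 (f l).

Fixpoint wf_annot (t : annot) : Prop :=
  match t with
  | AConst c => in01 c
  | AVar _ => True
  | AApp f args =>
      fun01 (length args) f /\
      (fix go (l : list annot) : Prop :=
         match l with nil => True | a :: l' => wf_annot a /\ go l' end) args
  end.

Definition wf_rule (At : Type) (r : arule At) : Prop :=
  fun01 (length (r_body r)) (r_fun r) /\
  Forall (fun p => wf_annot (snd p)) (r_body r).

Definition wf_cgap (P : cgap V VP EP) : Prop := Forall (@wf_rule _) (c_rules P).

Definition gterm (theta : nat -> V) (t : term V) : V :=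
  match t with TVar x => theta x | TConst v => v end.

Definition gatm (theta : nat -> V) (a : atom V VP EP) : gatom V VP EP :=
  match a with
  | AtV p t => GV p (gterm theta t)
  | AtE e t1 t2 => GE e (gterm theta t1) (gterm theta t2)
  end.

Definition ground_rule (theta : nat -> V) (r : arule (atom V VP EP))
  : arule (gatom V VP EP) :=
  mkRule (gatm theta (r_head r)) (r_fun r)
         (map (fun p => (gatm theta (fst p), snd p)) (r_body r)).

Definition interp := gatom V VP EP -> R.
Definition is_interp (I : interp) : Prop := forall A, in01 (I A).
Definition ileq (I J : interp) : Prop := forall A, I A <= J A.

Definition valuation (rho : nat -> R) : Prop := forall x, in01 (rho x).

Definition sat_grule (I : interp) (r : arule (gatom V VP EP)) : Prop :=
  forall rho, valuation rho ->
    Forall (fun p => eval_annot rho (snd p) <= I (fst p)) (r_body r) ->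
    r_fun r (map (fun p => eval_annot rho (snd p)) (r_body r)) <= I (r_head r).

Definition gprog := arule (gatom V VP EP) -> Prop.

Definition gmodel (P : gprog) (I : interp) : Prop :=
  is_interp I /\ forall r, P r -> sat_grule I r.

Definition is_MM (P : gprog) (M : interp) : Prop :=
  gmodel P M /\ forall N, gmodel P N -> ileq M N.

(* The rule  B : mu <- A : mu  (mu an annotation variable). *)
Definition copy_rule (B A : gatom V VP EP) : arule (gatom V VP EP) :=
  mkRule B (fun l => hd 0 l) [(A, AVar 0)].

Definition ground_rules (P : cgap V VP EP) : gprog :=
  fun r => exists r0 theta, In r0 (c_rules P) /\ r = ground_rule theta r0.

Definition vcA (P : cgap V VP EP) (i : nat) (v : V) : gatom V VP EP :=
  GV (vc_a P i) v.
Definition vcB (P : cgap V VP EP) (i : nat) (v : V) : gatom V VP EP :=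
  GV (vc_b P i) v.

Definition sat_vc (P : cgap V VP EP) (I : interp) (v : V) : Prop :=
  exists i, (i < vc_m P)%nat /\ I (vcB P i v) = I (vcA P i v) /\
    forall j, (j < vc_m P)%nat -> j <> i -> I (vcB P j v) = 0.

Definition cmodel (P : cgap V VP EP) (I : interp) : Prop :=
  is_interp I /\
  (forall r, ground_rules P r -> sat_grule I r) /\
  (forall v, sat_vc P I v).

Definition coh (P : cgap V VP EP) (I : interp) : gprog :=
  fun r => ground_rules P r \/
    exists v i, (i < vc_m P)%nat /\ 0 < I (vcA P i v) /\
      I (vcA P i v) = I (vcB P i v) /\ r = copy_rule (vcB P i v) (vcA P i v).

Definition coherent (P : cgap V VP EP) (M : interp) : Prop :=
  cmodel P M /\ is_MM (coh P M) M.

Definition Pi_sigma (P : cgap V VP EP) (sigma : V -> nat) : gprog :=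
  fun r => ground_rules P r \/
    exists v, r = copy_rule (vcB P (sigma v) v) (vcA P (sigma v) v).

End Semantics.

(* Main.v *)
Require Import Defs.
From Stdlib Require Import Reals List Lra ClassicalEpsilon.
Open Scope R_scope.

Lemma copy_sat (V VP EP : Type) (I : interp V VP EP) B A :
  I A <= I B -> sat_grule I (copy_rule B A).
Proof.
  intros H rho _ HF. simpl in *. inversion HF; subst. simpl in *. lra.
Qed.

Lemma min_sat (V VP EP : Type) (I N : interp V VP EP) r :
  sat_grule I r -> sat_grule N r ->
  sat_grule (fun a => Rmin (N a) (I a)) r.
Proof.
  intros H1 H2 rho Hr HF.
  assert (HI : Forall (fun p => eval_annot rho (snd p) <= I (fst p)) (r_body r)).
  { eapply Forall_impl; [|exact HF]; intros p Hp; simpl in Hp.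
    pose proof (Rmin_r (N (fst p)) (I (fst p))); lra. }
  assert (HN : Forall (fun p => eval_annot rho (snd p) <= N (fst p)) (r_body r)).
  { eapply Forall_impl; [|exact HF]; intros p Hp; simpl in Hp.
    pose proof (Rmin_l (N (fst p)) (I (fst p))); lra. }
  specialize (H1 rho Hr HI). specialize (H2 rho Hr HN).
  apply Rmin_glb; assumption.
Qed.

Theorem mainTheorem1 (V VP EP : Type)
  (V_finite : exists l : list V, forall v : V, In v l)
  (P : cgap V VP EP) (wfP : wf_cgap P)
  (I : interp V VP EP) (HI : is_interp I) :
  coherent P I <->
  exists sigma : V -> nat,
    (forall v, (sigma v < vc_m P)%nat) /\
    is_MM (Pi_sigma P sigma) I /\
    (forall v, sat_vc P I v).
Proof.
  split.
  - intros [[HI' [Hg Hvc]] [[_ Hcm] Hmin]].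
    set (sigma := fun v => proj1_sig (constructive_indefinite_description _ (Hvc v))).
    assert (Hs : forall v, (sigma v < vc_m P)%nat /\
       I (vcB P (sigma v) v) = I (vcA P (sigma v) v) /\
       forall j, (j < vc_m P)%nat -> j <> sigma v -> I (vcB P j v) = 0).
    { intro v. unfold sigma. destruct (constructive_indefinite_description _ (Hvc v)) as [i Hi].
      exact Hi. }
    exists sigma. split; [intro v; apply Hs|]. split; [|exact Hvc].
    split.
    + split; [exact HI|]. intros r [Hr|[v ->]]; [now apply Hg|].
      apply copy_sat. destruct (Hs v) as [_ [E _]]. lra.
    + intros N [HN HNr]. apply Hmin. split; [exact HN|].
      intros r [Hr|[v [i [Him [Hpos [E ->]]]]]]; [apply HNr; now left|].
      destruct (PeanoNat.Nat.eq_dec i (sigma v)) as [->|Hne].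
      * apply HNr. right. now exists v.
      * destruct (Hs v) as [_ [_ Hz]]. rewrite (Hz i Him Hne) in E. lra.
  - intros [sigma [Hsl [[[_ Hm] Hmin] Hvc]]].
    split; [split; [exact HI|split; [intros r Hr; apply Hm; now left|exact Hvc]]|].
    assert (Heq : forall v, I (vcB P (sigma v) v) = I (vcA P (sigma v) v)).
    { intro v.
      assert (Hle : I (vcA P (sigma v) v) <= I (vcB P (sigma v) v)).
      { assert (H := Hm _ (or_intror (ex_intro _ v eq_refl))).
        set (a := I (vcA P (sigma v) v)).
        specialize (H (fun _ => a)). simpl in H. apply H.
        - intro x. apply HI.
        - constructor; [simpl; unfold a; lra|constructor]. }
      destruct (Hvc v) as [i [Hi [E Hz]]].
      destruct (PeanoNat.Nat.eq_dec (sigma v) i) as [->|Hne]; [exact E|].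
      rewrite (Hz _ (Hsl v) Hne) in *. destruct (HI (vcA P (sigma v) v)). lra. }
    split.
    + split; [exact HI|]. intros r [Hr|[v [i [_ [_ [E ->]]]]]]; [now apply Hm; left|].
      apply copy_sat. lra.
    + intros N [HN HNr].
      assert (Hmn : ileq I (fun a => Rmin (N a) (I a))).
      { apply Hmin. split.
        - intro a. destruct (HN a), (HI a). unfold in01.
          pose proof (Rmin_l (N a) (I a)). pose proof (Rmin_r (N a) (I a)).
          unfold Rmin; destruct (Rle_dec (N a) (I a)); lra.
        - intros r Hr. destruct Hr as [Hr|[v ->]].
          + apply min_sat; [apply Hm; now left|apply HNr; now left].
          + destruct (Rlt_dec 0 (I (vcA P (sigma v) v))) as [Hp|Hp].
            * apply min_sat; [apply Hm; right; now exists v|].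
              apply HNr. right. exists v, (sigma v). repeat split; auto.
            * intros rho _ HF. simpl in *. inversion HF; subst. simpl in *.
              pose proof (Rmin_r (N (vcA P (sigma v) v)) (I (vcA P (sigma v) v))).
              destruct (HN (vcB P (sigma v) v)), (HI (vcB P (sigma v) v)).
              assert (0 <= Rmin (N (vcB P (sigma v) v)) (I (vcB P (sigma v) v))).
              { apply Rmin_glb; lra. }
              lra. }
      intro a. specialize (Hmn a). simpl in Hmn.
      pose proof (Rmin_l (N a) (I a)). lra.
Qed.
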